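(* With $\Delta=\{D_1,\dots,D_6\}$ and $\sigma_1=D_1+D_2-D_3$, $\sigma_2=-D_1+D_2+D_3-D_4-D_6$, $\sigma_3=-D_2+D_3+D_4-D_5$, $\sigma_4=-D_3+D_4+D_5$, $\sigma_5=-D_5+D_6$ in $\mathbb Z\Delta$, let $(D,E,F)$ be a low fundamental triple, put $\gamma=D+E-F$, and suppose $\sigma_5\in\mathrm{supp}_\Sigma\gamma$. Then, up to exchanging $D$ and $E$, $(D,E,F)$ is one of: $(D_2,D_3,D_1+D_4+D_5)$ with $\gamma=\sigma_2+\sigma_5$; $(D_3,D_3,D_1+2D_5)$ with $\gamma=\sigma_2+\sigma_3+\sigma_5$; $(D_2,D_2,D_4+D_5)$ with $\gamma=\sigma_1+\sigma_2+\sigma_5$; $(D_2,D_3,2D_5)$ with $\gamma=\sigma_1+\sigma_2+\sigma_3+\sigma_5$; $(D_3,D_4,D_1+D_5)$ with $\gamma=\sigma_2+\sigma_3+\sigma_4+\sigma_5$; $(D_4,D_4,D_1)$ with $\gamma=\sigma_2+\sigma_3+2\sigma_4+\sigma_5$.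
   Context: $\Sigma=\{\sigma_1,\dots,\sigma_5\}$. For $D,E\in\mathbb Z\Delta$ write $D\le_\Sigma E$ if $E-D\in\mathbb N\Sigma$. A triple $(D,E,F)\in(\mathbb N\Delta)^3$ with $F\le_\Sigma D+E$ is low if for all $D',E'\in\mathbb N\Delta$ with $D'\le_\Sigma D$, $E'\le_\Sigma E$ and $F\le_\Sigma D'+E'$ one has $D'=D$ and $E'=E$; it is fundamental if $D,E\in\Delta$. For $\gamma=\sum a_i\sigma_i\in\mathbb N\Sigma$, $\mathrm{supp}_\Sigma\gamma=\{\sigma_i:a_i>0\}$. *)

(* Defs.v *)
(* Z-lattice ZΔ with basis Δ = {D_1,...,D_6} is modelled as
   finite functions 'I_6 -> int (coordinate i-1 = coefficient of D_i). *)
From HB Require Import structures.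
From mathcomp Require Import all_boot all_order all_algebra.
Set Implicit Arguments. Unset Strict Implicit. Unset Printing Implicit Defensive.
Import Order.TTheory GRing.Theory Num.Theory.
Local Open Scope ring_scope.

Definition ZD := {ffun 'I_6 -> int}.

Definition Dv (i : 'I_6) : ZD := [ffun j => (i == j)%:R].

Definition D1 : ZD := Dv (@Ordinal 6 0 isT).
Definition D2 : ZD := Dv (@Ordinal 6 1 isT).
Definition D3 : ZD := Dv (@Ordinal 6 2 isT).
Definition D4 : ZD := Dv (@Ordinal 6 3 isT).
Definition D5 : ZD := Dv (@Ordinal 6 4 isT).
Definition D6 : ZD := Dv (@Ordinal 6 5 isT).

Definition sig1 : ZD := D1 + D2 - D3.
Definition sig2 : ZD := - D1 + D2 + D3 - D4 - D6.
Definition sig3 : ZD := - D2 + D3 + D4 - D5.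
Definition sig4 : ZD := - D3 + D4 + D5.
Definition sig5 : ZD := - D5 + D6.

Definition sigma (i : 'I_5) : ZD :=
  match val i with
  | 0 => sig1 | 1 => sig2 | 2 => sig3 | 3 => sig4 | _ => sig5
  end.

Definition NScoef (a : 'I_5 -> nat) (x : ZD) : Prop :=
  x = \sum_(i < 5) sigma i *+ a i.

Definition inNS (x : ZD) : Prop := exists a : 'I_5 -> nat, NScoef a x.

Definition leS (D E : ZD) : Prop := inNS (E - D).

Definition inND (x : ZD) : Prop := forall i, 0 <= x i.

Definition inDelta (x : ZD) : Prop := exists i, x = Dv i.

Definition low_triple (D E F : ZD) : Prop :=
  [/\ inND D, inND E, inND F, leS F (D + E) &
   forall D' E' : ZD, inND D' -> inND E' -> leS D' D -> leS E' E ->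
     leS F (D' + E') -> D' = D /\ E' = E].

Definition fundamental (D E F : ZD) : Prop := inDelta D /\ inDelta E.

(* σ_5 ∈ supp_Σ γ (γ ∈ NΣ with positive σ_5-coefficient; the σ_i are
   linearly independent so the coefficients are unique). *)
Definition sig5_in_supp (g : ZD) : Prop :=
  exists a : 'I_5 -> nat, NScoef a g /\ (0 < a (@Ordinal 5 4 isT))%N.

Definition triple_is (D E F X Y Z : ZD) : Prop :=
  ((D = X /\ E = Y) \/ (D = Y /\ E = X)) /\ F = Z.

(* Main.v *)
Require Import Defs.
From HB Require Import structures.
From mathcomp Require Import all_boot all_order all_algebra zify.
Import Order.TTheory GRing.Theory Num.Theory.
Local Open Scope ring_scope.

Lemma fD (f g : ZD) x : (f+g) x = f x + g x. Proof. by rewrite ffunE. Qed.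
Lemma fN (f : ZD) x : (- f) x = - f x. Proof. by rewrite ffunE. Qed.
Lemma fB (f g : ZD) x : (f-g) x = f x - g x. Proof. by rewrite fD fN. Qed.
Lemma fM (f : ZD) n x : (f *+ n) x = f x *+ n. Proof. by rewrite ffunMnE. Qed.

Definition S (a : 'I_5 -> nat) : ZD := \sum_(i < 5) sigma i *+ a i.

Lemma SE a : S a = sig1 *+ a (@Ordinal 5 0 isT) + sig2 *+ a (@Ordinal 5 1 isT)
  + sig3 *+ a (@Ordinal 5 2 isT) + sig4 *+ a (@Ordinal 5 3 isT) + sig5 *+ a (@Ordinal 5 4 isT).
Proof.
rewrite /S !big_ord_recr big_ord0 /= add0r.
by do ! congr (_ + _); congr (_ *+ a _); apply/val_inj.
Qed.

Lemma SB a b : (forall k, (b k <= a k)%N) -> S (fun k => a k - b k)%N = S a - S b.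
Proof. by move=> le; rewrite /S -sumrB; apply: eq_bigr => k _; rewrite mulrnBr. Qed.

Lemma Szero : S (fun _ => 0%N) = 0.
Proof. by rewrite /S big1. Qed.

Lemma low_D D E F a b D' : low_triple D E F -> D + E - F = S a -> inND D' ->
  D - D' = S b -> (forall k, (b k <= a k)%N) -> D' = D.
Proof.
case=> _ nE _ _ low Ha nD' Hb le.
have [] // := low D' E nD' nE.
- by exists b.
- by exists (fun _ => 0%N); rewrite subrr -Szero.
- exists (fun k => a k - b k)%N; rewrite /NScoef -/(S _) SB // -Ha -Hb.
  by apply/ffunP => x; rewrite !(fD,fB,fN); lia.
Qed.

Lemma low_E D E F a b E' : low_triple D E F -> D + E - F = S a -> inND E' ->
  E - E' = S b -> (forall k, (b k <= a k)%N) -> E' = E.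
Proof.
case=> nD _ _ _ low Ha nE' Hb le.
have [] // := low D E' nD nE'.
- by exists (fun _ => 0%N); rewrite subrr -Szero.
- by exists b.
- exists (fun k => a k - b k)%N; rewrite /NScoef -/(S _) SB // -Ha -Hb.
  by apply/ffunP => x; rewrite !(fD,fB,fN); lia.
Qed.

Ltac unf := rewrite ?SE /sig1 /sig2 /sig3 /sig4 /sig5 /D1 /D2 /D3 /D4 /D5 /D6 /Dv.

Ltac zeq := apply/ffunP => -[[|[|[|[|[|[|?]]]]]] ?] //; unf;
  rewrite !(fD,fB,fM,fN) !ffunE /=; lia.

Lemma S0 a (h : (0 < 6)%N) : S a (Ordinal h) = (a (Ordinal (isT : (0 < 5)%N)))%:Z - (a (Ordinal (isT : (1 < 5)%N)))%:Z.
Proof.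
rewrite (bool_irrelevance h isT) SE /sig1 /sig2 /sig3 /sig4 /sig5 /D1 /D2 /D3 /D4 /D5 /D6 !(fD,fB,fM,fN) !ffunE /=.
set x0 := a _; set x1 := a _; set x2 := a _; set x3 := a _; set x4 := a _. lia.
Qed.

Lemma S1 a (h : (1 < 6)%N) : S a (Ordinal h) = (a (Ordinal (isT : (0 < 5)%N)))%:Z + (a (Ordinal (isT : (1 < 5)%N)))%:Z - (a (Ordinal (isT : (2 < 5)%N)))%:Z.
Proof.
rewrite (bool_irrelevance h isT) SE /sig1 /sig2 /sig3 /sig4 /sig5 /D1 /D2 /D3 /D4 /D5 /D6 !(fD,fB,fM,fN) !ffunE /=.
set x0 := a _; set x1 := a _; set x2 := a _; set x3 := a _; set x4 := a _. lia.
Qed.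

Lemma S2 a (h : (2 < 6)%N) : S a (Ordinal h) = - (a (Ordinal (isT : (0 < 5)%N)))%:Z + (a (Ordinal (isT : (1 < 5)%N)))%:Z + (a (Ordinal (isT : (2 < 5)%N)))%:Z - (a (Ordinal (isT : (3 < 5)%N)))%:Z.
Proof.
rewrite (bool_irrelevance h isT) SE /sig1 /sig2 /sig3 /sig4 /sig5 /D1 /D2 /D3 /D4 /D5 /D6 !(fD,fB,fM,fN) !ffunE /=.
set x0 := a _; set x1 := a _; set x2 := a _; set x3 := a _; set x4 := a _. lia.
Qed.

Lemma S3 a (h : (3 < 6)%N) : S a (Ordinal h) = - (a (Ordinal (isT : (1 < 5)%N)))%:Z + (a (Ordinal (isT : (2 < 5)%N)))%:Z + (a (Ordinal (isT : (3 < 5)%N)))%:Z.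
Proof.
rewrite (bool_irrelevance h isT) SE /sig1 /sig2 /sig3 /sig4 /sig5 /D1 /D2 /D3 /D4 /D5 /D6 !(fD,fB,fM,fN) !ffunE /=.
set x0 := a _; set x1 := a _; set x2 := a _; set x3 := a _; set x4 := a _. lia.
Qed.

Lemma S4 a (h : (4 < 6)%N) : S a (Ordinal h) = - (a (Ordinal (isT : (2 < 5)%N)))%:Z + (a (Ordinal (isT : (3 < 5)%N)))%:Z - (a (Ordinal (isT : (4 < 5)%N)))%:Z.
Proof.
rewrite (bool_irrelevance h isT) SE /sig1 /sig2 /sig3 /sig4 /sig5 /D1 /D2 /D3 /D4 /D5 /D6 !(fD,fB,fM,fN) !ffunE /=.
set x0 := a _; set x1 := a _; set x2 := a _; set x3 := a _; set x4 := a _. lia.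
Qed.

Lemma S5 a (h : (5 < 6)%N) : S a (Ordinal h) = - (a (Ordinal (isT : (1 < 5)%N)))%:Z + (a (Ordinal (isT : (4 < 5)%N)))%:Z.
Proof.
rewrite (bool_irrelevance h isT) SE /sig1 /sig2 /sig3 /sig4 /sig5 /D1 /D2 /D3 /D4 /D5 /D6 !(fD,fB,fM,fN) !ffunE /=.
set x0 := a _; set x1 := a _; set x2 := a _; set x3 := a _; set x4 := a _. lia.
Qed.

Lemma arith (i j a0 a1 a2 a3 a4 : nat) :
  (i < 5)%N -> (j < 5)%N ->
  (i <> 1%N \/ a1 = 0%N \/ a3 = 0%N) -> (j <> 1%N \/ a1 = 0%N \/ a3 = 0%N) -> (0 < a4)%N ->
  0 <= ((i == 0)%N)%:R + ((j == 0)%N)%:R - (a0%:Z - a1%:Z) :> int ->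
  0 <= ((i == 1)%N)%:R + ((j == 1)%N)%:R - (a0%:Z + a1%:Z - a2%:Z) :> int ->
  0 <= ((i == 2)%N)%:R + ((j == 2)%N)%:R - (- a0%:Z + a1%:Z + a2%:Z - a3%:Z) :> int ->
  0 <= ((i == 3)%N)%:R + ((j == 3)%N)%:R - (- a1%:Z + a2%:Z + a3%:Z) :> int ->
  0 <= ((i == 4)%N)%:R + ((j == 4)%N)%:R - (- a2%:Z + a3%:Z - a4%:Z) :> int ->
  0 <= ((i == 5)%N)%:R + ((j == 5)%N)%:R - (- a1%:Z + a4%:Z) :> int ->
  ([/\ i = 1%N, j = 1%N, a0 = 1%N, a1 = 1%N & [/\ a2 = 0%N, a3 = 0%N & a4 = 1%N]]) \/
  ([/\ i = 1%N, j = 2%N, a0 = 0%N, a1 = 1%N & [/\ a2 = 0%N, a3 = 0%N & a4 = 1%N]]) \/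
  ([/\ i = 1%N, j = 2%N, a0 = 1%N, a1 = 1%N & [/\ a2 = 1%N, a3 = 0%N & a4 = 1%N]]) \/
  ([/\ i = 2%N, j = 1%N, a0 = 0%N, a1 = 1%N & [/\ a2 = 0%N, a3 = 0%N & a4 = 1%N]]) \/
  ([/\ i = 2%N, j = 1%N, a0 = 1%N, a1 = 1%N & [/\ a2 = 1%N, a3 = 0%N & a4 = 1%N]]) \/
  ([/\ i = 2%N, j = 2%N, a0 = 0%N, a1 = 1%N & [/\ a2 = 1%N, a3 = 0%N & a4 = 1%N]]) \/
  ([/\ i = 2%N, j = 3%N, a0 = 0%N, a1 = 1%N & [/\ a2 = 1%N, a3 = 1%N & a4 = 1%N]]) \/
  ([/\ i = 3%N, j = 2%N, a0 = 0%N, a1 = 1%N & [/\ a2 = 1%N, a3 = 1%N & a4 = 1%N]]) \/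
  ([/\ i = 3%N, j = 3%N, a0 = 0%N, a1 = 1%N & [/\ a2 = 1%N, a3 = 2%N & a4 = 1%N]]).
Proof.
move=> hi hj Hi Hj h4.
case: i hi Hi => [|[|[|[|[|//]]]]] _ Hi /=;
case: j hj Hj => [|[|[|[|[|//]]]]] _ Hj /= c0 c1 c2 c3 c4 c5;
  try (exfalso; lia).
all: have [ha0|ha0] := leqP a0 0%N.
all: try (do 0 right; left; repeat split; lia).
all: try (do 1 right; left; repeat split; lia).
all: try (do 2 right; left; repeat split; lia).
all: try (do 3 right; left; repeat split; lia).
all: try (do 4 right; left; repeat split; lia).
all: try (do 5 right; left; repeat split; lia).
all: try (do 6 right; left; repeat split; lia).
all: try (do 7 right; left; repeat split; lia).
all: try (do 8 right; repeat split; lia).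
Qed.

Ltac zeqv := apply/ffunP => -[[|[|[|[|[|[|?]]]]]] ?] //;
  rewrite ?(fD,fB,fM,fN) ?S0 ?S1 ?S2 ?S3 ?S4 ?S5 /sig1 /sig2 /sig3 /sig4 /sig5 /D1 /D2 /D3 /D4 /D5 /D6 /Dv ?(fD,fB,fM,fN) !ffunE /=; lia.
Ltac fin := split; [split; [first [left; split; zeq | right; split; zeq] | zeq] | zeq].

Theorem lemma2p8 (D E F : ZD) :
  low_triple D E F -> fundamental D E F ->
  sig5_in_supp (D + E - F) ->
  (triple_is D E F D2 D3 (D1 + D4 + D5) /\ D + E - F = sig2 + sig5) \/
      (triple_is D E F D3 D3 (D1 + D5 *+ 2) /\ D + E - F = sig2 + sig3 + sig5) \/
      (triple_is D E F D2 D2 (D4 + D5) /\ D + E - F = sig1 + sig2 + sig5) \/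
      (triple_is D E F D2 D3 (D5 *+ 2) /\ D + E - F = sig1 + sig2 + sig3 + sig5) \/
      (triple_is D E F D3 D4 (D1 + D5) /\ D + E - F = sig2 + sig3 + sig4 + sig5) \/
    (triple_is D E F D4 D4 D1 /\ D + E - F = sig2 + sig3 + sig4 *+ 2 + sig5).
Proof.
move=> low [[[iv Hiv] Di] [[jv Hjv] Ej]] [a [Ha a4]].
set i := Ordinal Hiv in Di. set j := Ordinal Hjv in Ej.
change (D + E - F = S a) in Ha.
have HF : F = D + E - S a.
  by rewrite -Ha; apply/ffunP => x; rewrite !(fD,fB,fN) opprB addrCA subrr addr0.
have nF : inND F by case: low.
have nD5 : inND D5 by move=> x; rewrite /D5 /Dv ffunE; case: (_ == _).
have nD1 : inND D1 by move=> x; rewrite /D1 /Dv ffunE; case: (_ == _).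
have Ni : val i <> 5%N.
  move=> h; have eD : D = D6 by rewrite Di /D6; congr Dv; apply/val_inj.
  have EE : D5 = D.
    refine (@low_D D E F a (fun k => (val k == 4)%N : nat) D5 low Ha nD5 _ _); first by rewrite eD; zeq.
    by case=> [[|[|[|[|[|?]]]]] H] //=; rewrite (bool_irrelevance H isT); lia.
  by move: EE; rewrite eD => /ffunP/(_ (Ordinal (isT : (4 < 6)%N))); rewrite !ffunE.
have Nj : val j <> 5%N.
  move=> h; have eE : E = D6 by rewrite Ej /D6; congr Dv; apply/val_inj.
  have EE : D5 = E.
    refine (@low_E D E F a (fun k => (val k == 4)%N : nat) D5 low Ha nD5 _ _); first by rewrite eE; zeq.
    by case=> [[|[|[|[|[|?]]]]] H] //=; rewrite (bool_irrelevance H isT); lia.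
  by move: EE; rewrite eE => /ffunP/(_ (Ordinal (isT : (4 < 6)%N))); rewrite !ffunE.
have Ni1 : val i <> 1%N \/ a (Ordinal (isT : (1 < 5)%N)) = 0%N \/ a (Ordinal (isT : (3 < 5)%N)) = 0%N.
  destruct (PeanoNat.Nat.eq_dec (val i) 1) as [h|h]; last by left.
  destruct (PeanoNat.Nat.eq_dec (a (Ordinal (isT : (1 < 5)%N))) 0) as [n1|n1]; first by right; left.
  destruct (PeanoNat.Nat.eq_dec (a (Ordinal (isT : (3 < 5)%N))) 0) as [n3|n3]; first by right; right.
  exfalso.
  have eD : D = D2 by rewrite Di /D2; congr Dv; apply/val_inj.
  have EE : D1 = D.
    refine (@low_D D E F a (fun k => (val k \in [:: 1; 3; 4])%N : nat) D1 low Ha nD1 _ _); first by rewrite eD; zeq.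
    by case=> [[|[|[|[|[|?]]]]] H] //=; rewrite (bool_irrelevance H isT); lia.
  by move: EE; rewrite eD => /ffunP/(_ (Ordinal (isT : (0 < 6)%N))); rewrite !ffunE.
have Nj1 : val j <> 1%N \/ a (Ordinal (isT : (1 < 5)%N)) = 0%N \/ a (Ordinal (isT : (3 < 5)%N)) = 0%N.
  destruct (PeanoNat.Nat.eq_dec (val j) 1) as [h|h]; last by left.
  destruct (PeanoNat.Nat.eq_dec (a (Ordinal (isT : (1 < 5)%N))) 0) as [n1|n1]; first by right; left.
  destruct (PeanoNat.Nat.eq_dec (a (Ordinal (isT : (3 < 5)%N))) 0) as [n3|n3]; first by right; right.
  exfalso.
  have eE : E = D2 by rewrite Ej /D2; congr Dv; apply/val_inj.
  have EE : D1 = E.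
    refine (@low_E D E F a (fun k => (val k \in [:: 1; 3; 4])%N : nat) D1 low Ha nD1 _ _); first by rewrite eE; zeq.
    by case=> [[|[|[|[|[|?]]]]] H] //=; rewrite (bool_irrelevance H isT); lia.
  by move: EE; rewrite eE => /ffunP/(_ (Ordinal (isT : (0 < 6)%N))); rewrite !ffunE.
have hi5 : (iv < 5)%N by have h1 := Hiv; have h2 : iv <> 5%N := Ni; lia.
have hj5 : (jv < 5)%N by have h1 := Hjv; have h2 : jv <> 5%N := Nj; lia.
have c0 := nF (Ordinal (isT : (0 < 6)%N)).
rewrite HF Di Ej !(fD,fB,fN) S0 /Dv !ffunE in c0.
have c1 := nF (Ordinal (isT : (1 < 6)%N)).
rewrite HF Di Ej !(fD,fB,fN) S1 /Dv !ffunE in c1.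
have c2 := nF (Ordinal (isT : (2 < 6)%N)).
rewrite HF Di Ej !(fD,fB,fN) S2 /Dv !ffunE in c2.
have c3 := nF (Ordinal (isT : (3 < 6)%N)).
rewrite HF Di Ej !(fD,fB,fN) S3 /Dv !ffunE in c3.
have c4 := nF (Ordinal (isT : (4 < 6)%N)).
rewrite HF Di Ej !(fD,fB,fN) S4 /Dv !ffunE in c4.
have c5 := nF (Ordinal (isT : (5 < 6)%N)).
rewrite HF Di Ej !(fD,fB,fN) S5 /Dv !ffunE in c5.
have H := arith _ _ _ _ _ _ _ hi5 hj5 Ni1 Nj1 a4 c0 c1 c2 c3 c4 c5.
rewrite HF Di Ej.
clear -H.
destruct H as [H|H].
{ destruct H as [hi hj e0 e1 [e2 e3 e4]]; subst iv jv.
  Time do 2 right; left; split; [split; [left; split; zeqv | zeqv] | zeqv]. }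
destruct H as [H|H].
{ destruct H as [hi hj e0 e1 [e2 e3 e4]]; subst iv jv.
  Time do 0 right; left; split; [split; [left; split; zeqv | zeqv] | zeqv]. }
destruct H as [H|H].
{ destruct H as [hi hj e0 e1 [e2 e3 e4]]; subst iv jv.
  Time do 3 right; left; split; [split; [left; split; zeqv | zeqv] | zeqv]. }
destruct H as [H|H].
{ destruct H as [hi hj e0 e1 [e2 e3 e4]]; subst iv jv.
  Time do 0 right; left; split; [split; [right; split; zeqv | zeqv] | zeqv]. }
destruct H as [H|H].
{ destruct H as [hi hj e0 e1 [e2 e3 e4]]; subst iv jv.
  Time do 3 right; left; split; [split; [right; split; zeqv | zeqv] | zeqv]. }
destruct H as [H|H].
{ destruct H as [hi hj e0 e1 [e2 e3 e4]]; subst iv jv.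
  Time do 1 right; left; split; [split; [left; split; zeqv | zeqv] | zeqv]. }
destruct H as [H|H].
{ destruct H as [hi hj e0 e1 [e2 e3 e4]]; subst iv jv.
  Time do 4 right; left; split; [split; [left; split; zeqv | zeqv] | zeqv]. }
destruct H as [H|H].
{ destruct H as [hi hj e0 e1 [e2 e3 e4]]; subst iv jv.
  Time do 4 right; left; split; [split; [right; split; zeqv | zeqv] | zeqv]. }
destruct H as [hi hj e0 e1 [e2 e3 e4]]; subst iv jv.
Time do 5 right;  split; [split; [left; split; zeqv | zeqv] | zeqv].
Qed.
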